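(* Let $T$ be a tournament with $n$ vertices and $t$ directed triangles, where $3t\geq n$. Then $$\alpha(T)\geq \frac{2}{3}\,n\sqrt{\frac{n}{3t}}.$$
   Context: A tournament is an orientation of a complete graph. A directed triangle is a directed cycle of length $3$. A subset $S\subseteq V(T)$ is acyclic if $T[S]$ contains no directed cycle; $\alpha(T)$ is the maximum size of an acyclic subset of $V(T)$. *)

(* Defs.v *)
From mathcomp Require Import all_boot.
From Stdlib Require Import Reals ClassicalDescription.
Set Implicit Arguments. Unset Strict Implicit. Unset Printing Implicit Defensive.

Definition is_tournament (V : finType) (E : rel V) : Prop :=
  (forall x, ~~ E x x) /\
  (forall x y, x != y -> (E x y && ~~ E y x) || (E y x && ~~ E x y)).

Definition directed_cycle (V : finType) (E : rel V) (s : seq V) : bool :=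
  [&& s != [::], uniq s & cycle E s].

Definition acyclic_set (V : finType) (E : rel V) (S : {set V}) : Prop :=
  forall s : seq V, all (fun v => v \in S) s -> ~~ directed_cycle E s.

Definition acyclic_setb (V : finType) (E : rel V) (S : {set V}) : bool :=
  if excluded_middle_informative (acyclic_set E S) then true else false.

Definition alpha (V : finType) (E : rel V) : nat :=
  \max_(S : {set V} | acyclic_setb E S) #|S|.

Definition is_dtriangle (V : finType) (E : rel V) (A : {set V}) : bool :=
  (#|A| == 3) &&
  [exists x in A, exists y in A, exists z in A, [&& E x y, E y z & E z x]].

Definition num_dtriangles (V : finType) (E : rel V) : nat :=
  #|[set A : {set V} | is_dtriangle E A]|.

(* Main.v *)
Require Import Defs.
From Stdlib Require Import Reals Lra ClassicalDescription.
From HB Require Import structures.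
From mathcomp Require Import all_boot.
Open Scope R_scope.
Section Comb.
Local Open Scope nat_scope.
Variables (V : finType) (E : rel V).
Hypothesis HT : is_tournament E.

Lemma tri_set (S : {set V}) x y z : x \in S -> y \in S -> z \in S ->
  E x y -> E y z -> E z x ->
  exists A, is_dtriangle E A && (A \subset S).
Proof.
case: HT => Hirr _ xS yS zS exy eyz ezx.
have nxy : x != y by apply/eqP=> h; move: exy; rewrite h; move: (Hirr y) => /negbTE ->.
have nyz : y != z by apply/eqP=> h; move: eyz; rewrite h; move: (Hirr z) => /negbTE ->.
have nzx : z != x by apply/eqP=> h; move: ezx; rewrite h; move: (Hirr x) => /negbTE ->.
exists [set x; y; z]; apply/andP; split.
  apply/andP; split.
    rewrite -setUA !cardsU1 cards1 !inE negb_or.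
    rewrite nxy nyz (eq_sym x z) nzx. done.
  apply/existsP; exists x; rewrite !inE eqxx /=.
  apply/existsP; exists y; rewrite !inE eqxx orbT /=.
  apply/existsP; exists z; rewrite !inE eqxx !orbT /=.
  by rewrite exy eyz ezx.
apply/subsetP=> w; rewrite !inE => /orP[/orP[]|] /eqP->//.
Qed.

Lemma cycle_tri (S : {set V}) n : forall s : seq V, size s <= n ->
  all (fun v => v \in S) s -> uniq s -> s != [::] -> cycle E s ->
  exists A, is_dtriangle E A && (A \subset S).
Proof.
case: (HT) => Hirr Htour.
elim: n => [|n IH] [|x [|y [|z r]]] //=.
- by rewrite andbT (negbTE (Hirr x)).
- move=> _ _; rewrite inE andbT => nxy _; rewrite andbT => /andP[exy eyx].
  by move: (Htour x y nxy); rewrite exy eyx.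
- move=> hs /and4P[xS yS zS rS] /and3P[hx hy hz] _ /and3P[exy eyz hp].
  case ezx: (E z x); first by move: (@tri_set S x y z xS yS zS exy eyz ezx); apply.
  idtac.
  have nxz : x != z by apply/eqP=> h; move: hx; rewrite h !inE eqxx orbT.
  have exz : E x z by move: (Htour x z nxz); rewrite ezx; case: (E x z).
  apply: (IH (x :: z :: r)) => //=.
  - by rewrite xS zS rS.
  - move: hx; rewrite !inE !negb_or => /and3P[_ -> ->].
    by rewrite hz.
  - by rewrite exz hp.
Qed.

Definition tri (S : {set V}) := #|[set A | is_dtriangle E A & A \subset S]|.

Lemma removal n : forall S : {set V}, #|S| <= n ->
  exists S', acyclic_set E S' /\ #|S| <= #|S'| + tri S.
Proof.
elim: n => [|n IH] S hS.
  exists S; split; last by apply: leq_addr.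
  move=> s hs; apply/negP => /and3P[ne un cy].
  case: s ne hs {un cy} => // x s _ /andP[xS _].
  by move: hS; rewrite leqn0 => /eqP/cards0_eq Se; rewrite Se inE in xS.
case: (boolP [exists A, is_dtriangle E A && (A \subset S)]).
  move=> /existsP[A /andP[tA AS]].
  have A3 : #|A| = 3 by move: tA => /andP[/eqP].
  have [x xA] : exists x, x \in A.
    by apply/set0Pn; rewrite -card_gt0 A3.
  have xS : x \in S by apply: (subsetP AS).
  have cS : #|S| = (#|S :\ x|).+1 by rewrite (cardsD1 x S) xS.
  have hS1 : #|S :\ x| <= n by rewrite -ltnS -cS.
  have [S' [aS' hS']] := IH (S :\ x) hS1.
  exists S'; split => //.
  have : tri (S :\ x) < tri S.
    apply: proper_card; apply/properP; split.
      apply/subsetP=> B; rewrite !inE => /andP[-> /subset_trans]; apply.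
      by apply: subD1set.
    exists A; first by rewrite inE tA AS.
    rewrite inE tA /=; apply/negP => /subsetP/(_ x xA); by rewrite !inE eqxx.
  move=> htri; rewrite cS; apply: leq_ltn_trans hS' _.
  by rewrite -addnS leq_add2l.
move=> hno; exists S; split; last by apply: leq_addr.
move=> s hs; apply/negP => /and3P[ne un cy].
have [A hA] := @cycle_tri S (size s) s (leqnn (size s)) hs un ne cy.
by move/negP: hno; apply; apply/existsP; exists A.
Qed.

End Comb.
Lemma RaddA : associative Rplus. Proof. by move=> *; rewrite Rplus_assoc. Qed.
Lemma RmulA : associative Rmult. Proof. by move=> *; rewrite Rmult_assoc. Qed.
HB.instance Definition _ := Monoid.isComLaw.Build R 0 Rplus RaddA Rplus_comm Rplus_0_l.
HB.instance Definition _ := Monoid.isComLaw.Build R 1 Rmult RmulA Rmult_comm Rmult_1_l.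

Lemma sum_aff (I : Type) (r : seq I) (P : pred I) (F F1 F0 : I -> R) a :
  (forall i, F i = a * F1 i + (1 - a) * F0 i) ->
  \big[Rplus/0]_(i <- r | P i) F i =
  a * \big[Rplus/0]_(i <- r | P i) F1 i + (1 - a) * \big[Rplus/0]_(i <- r | P i) F0 i.
Proof.
move=> h; apply: (big_rec3 (fun y y1 y0 => y = a * y1 + (1 - a) * y0)); first ring.
by move=> i y y1 y0 _ ->; rewrite h; ring.
Qed.

Lemma sumR_nat (I : Type) (r : seq I) (P : pred I) (f : I -> nat) :
  \big[Rplus/0]_(i <- r | P i) INR (f i) = INR (\sum_(i <- r | P i) f i).
Proof.
have hm : {morph INR : m n / (m + n)%N >-> m + n} := fun m n => plus_INR m n.
by rewrite (big_morph INR hm (erefl (INR 0))).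
Qed.

Lemma prodR_nat (I : Type) (r : seq I) (P : pred I) (f : I -> nat) :
  \big[Rmult/1]_(i <- r | P i) INR (f i) = INR (\prod_(i <- r | P i) f i).
Proof.
have hm : {morph INR : m n / (m * n)%N >-> m * n} := fun m n => mult_INR m n.
by rewrite (big_morph INR hm (erefl (INR 1))).
Qed.

Lemma sumR_const (I : Type) (r : seq I) (P : pred I) c :
  \big[Rplus/0]_(i <- r | P i) c = INR (\sum_(i <- r | P i) 1) * c.
Proof.
have hm : {morph (fun k => INR k * c) : m n / (m + n)%N >-> m + n}.
  by move=> m n /=; rewrite plus_INR; ring.
have h0 : (fun k => INR k * c) 0%N = 0 by rewrite /=; ring.
symmetry; etransitivity; first exact: (big_morph (fun k => INR k * c) hm h0 r P (fun _ => 1%N)).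
by apply: eq_bigr => i _ /=; ring.
Qed.

Lemma prodR_const (I : Type) (r : seq I) (P : pred I) c :
  \big[Rmult/1]_(i <- r | P i) c = c ^ (\sum_(i <- r | P i) 1).
Proof.
have hm : {morph (fun k => c ^ k) : m n / (m + n)%N >-> m * n}.
  by move=> m n /=; rewrite pow_add.
have h0 : (fun k => c ^ k) 0%N = 1 by [].
symmetry; etransitivity; first exact: (big_morph (fun k => c ^ k) hm h0 r P (fun _ => 1%N)).
by apply: eq_bigr => i _ /=; ring.
Qed.

Section Real.
Variables (V : finType) (E : rel V).

Definition Tset := [set A : {set V} | is_dtriangle E A].
Definition Ef (x : V -> R) : R :=
  \big[Rplus/0]_(u : V) x u - \big[Rplus/0]_(A in Tset) \big[Rmult/1]_(u in A) x u.
Definition upd (x : V -> R) v a := fun u => if u == v then a else x u.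

Lemma prod_aff x v (A : {set V}) :
  \big[Rmult/1]_(u in A) x u =
  x v * \big[Rmult/1]_(u in A) upd x v 1 u + (1 - x v) * \big[Rmult/1]_(u in A) upd x v 0 u.
Proof.
case: (boolP (v \in A)) => vA.
  rewrite !(bigD1 v vA) /= /upd eqxx.
  set Q := \big[Rmult/1]_(i | (i \in A) && (i != v)) x i.
  have e1 : forall a, \big[Rmult/1]_(i | (i \in A) && (i != v)) (if i == v then a else x i) = Q.
    by move=> a; apply: eq_bigr => i /andP[_ /negbTE ->].
  rewrite !e1; ring.
have e1 : forall a, \big[Rmult/1]_(i in A) upd x v a i = \big[Rmult/1]_(i in A) x i.
  move=> a; apply: eq_bigr => i iA; rewrite /upd.
  by case: eqP => // h; rewrite -h iA in vA.
rewrite !e1; ring.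
Qed.

Lemma Ef_aff x v : Ef x = x v * Ef (upd x v 1) + (1 - x v) * Ef (upd x v 0).
Proof.
rewrite /Ef.
have -> : \big[Rplus/0]_(u : V) x u = x v * \big[Rplus/0]_(u : V) upd x v 1 u
   + (1 - x v) * \big[Rplus/0]_(u : V) upd x v 0 u.
  by apply: sum_aff => u; rewrite /upd; case: eqP => [->|_]; ring.
have -> : \big[Rplus/0]_(A in Tset) \big[Rmult/1]_(u in A) x u =
   x v * \big[Rplus/0]_(A in Tset) \big[Rmult/1]_(u in A) upd x v 1 u
   + (1 - x v) * \big[Rplus/0]_(A in Tset) \big[Rmult/1]_(u in A) upd x v 0 u.
  by apply: sum_aff => A; apply: prod_aff.
ring.
Qed.

Lemma round (l : seq V) : forall x, (forall u, 0 <= x u <= 1) ->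
  exists y, (forall u, 0 <= y u <= 1) /\ (forall u, u \in l -> y u = 0 \/ y u = 1)
    /\ (forall u, u \notin l -> y u = x u) /\ Ef x <= Ef y.
Proof.
elim: l => [|v l IH] x hx.
  exists x; split=> //; split=> //; split=> //; apply: Rle_refl.
have [xb [hxb [xbv [xbo hE]]]] : exists xb, (forall u, 0 <= xb u <= 1) /\
    (xb v = 0 \/ xb v = 1) /\ (forall u, u != v -> xb u = x u) /\ Ef x <= Ef xb.
  have ha := Ef_aff x v; have hxv := hx v.
  case: (Rle_dec (Ef (upd x v 0)) (Ef (upd x v 1))) => h.
    exists (upd x v 1); split; first by move=> u; rewrite /upd; case: eqP => _; [lra|apply hx].
    split; first by rewrite /upd eqxx; right.
    split; first by move=> u /negbTE; rewrite /upd => ->.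
    nra.
  exists (upd x v 0); split; first by move=> u; rewrite /upd; case: eqP => _; [lra|apply hx].
  split; first by rewrite /upd eqxx; left.
  split; first by move=> u /negbTE; rewrite /upd => ->.
  nra.
have [y [hy [hyl [hyo hEy]]]] := IH xb hxb.
exists y; split => //; split.
  move=> u; rewrite inE => /orP[/eqP ->|ul]; last by apply: hyl.
  case: (boolP (v \in l)) => vl; first by apply: hyl.
  by rewrite hyo.
split; last by lra.
move=> u; rewrite inE negb_or => /andP[uv ul].
by rewrite hyo // xbo.
Qed.

Definition triR (S : {set V}) := #|[set A | is_dtriangle E A & A \subset S]|.

Lemma Ef01 (y : V -> R) (S : {set V}) : (forall u, y u = INR (u \in S)) ->
  Ef y = INR #|S| - INR (triR S).
Proof.
move=> hy; rewrite /Ef.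
have -> : \big[Rplus/0]_(u : V) y u = INR #|S|.
  rewrite (eq_bigr (fun u => INR (u \in S))); last by move=> u _; apply hy.
  rewrite sumR_nat; congr INR.
  by rewrite -sum1_card; symmetry; rewrite big_mkcond /=; apply: eq_bigr => i _; case: (i \in S).
have -> : \big[Rplus/0]_(A in Tset) \big[Rmult/1]_(u in A) y u = INR (triR S).
  rewrite (eq_bigr (fun A : {set V} => INR (A \subset S))); last first.
    move=> A _; rewrite (eq_bigr (fun u => INR (u \in S))); last by move=> u _; apply hy.
    rewrite prodR_nat; congr INR.
    case: (boolP (A \subset S)) => h.
      by apply: big1 => u uA; rewrite (subsetP h u uA).
    have [u uA uS] := subsetPn h.
    by rewrite (bigD1 u uA) /= (negbTE uS) mul0n.
  rewrite sumR_nat; congr INR.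
  rewrite /triR -sum1dep_card big_mkcondr /=.
  idtac.
  apply: eq_big => [A|A _]; first by rewrite inE.
  by case: (A \subset S).
by [].
Qed.

Lemma Efconst p : Ef (fun _ => p) = INR #|V| * p - INR (num_dtriangles E) * p ^ 3.
Proof.
rewrite /Ef sumR_const.
have -> : (\sum_(u : V) 1)%N = #|V| by rewrite sum1_card.
rewrite (eq_bigr (fun _ => p ^ 3)); last first.
  move=> A; rewrite inE => /andP[/eqP A3 _].
  by rewrite prodR_const sum1_card A3.
by rewrite sumR_const sum1_card.
Qed.

End Real.

Theorem mainTheorem4 (V : finType) (E : rel V) :
  is_tournament E ->
  (#|V| <= 3 * num_dtriangles E)%N ->
  2 / 3 * INR #|V| * sqrt (INR #|V| / (3 * INR (num_dtriangles E)))
    <= INR (alpha E).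
Proof.
move=> HT hn.
set n := #|V| in hn *; set t := num_dtriangles E in hn *.
have alpha0 : 0 <= INR (alpha E) by apply: pos_INR.
case: (posnP t) => [t0|tpos].
  have n0 : n = 0%N by move: hn; rewrite t0 muln0 leqn0 => /eqP.
  by rewrite n0 /= Rmult_0_r Rmult_0_l.
have tR : 0 < INR t by apply: lt_0_INR; apply/ltP.
have nR : INR n <= 3 * INR t.
  have := le_INR _ _ (elimT leP hn); rewrite mult_INR /=; lra.
have n0R : 0 <= INR n by apply: pos_INR.
set q := INR n / (3 * INR t).
have q0 : 0 <= q by rewrite /q; apply: Rmult_le_pos; [lra|apply: Rlt_le; apply: Rinv_0_lt_compat; lra].
have qe : q * (3 * INR t) = INR n by rewrite /q; field; lra.
have q1 : q <= 1 by nra.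
set p := sqrt q.
have p0 : 0 <= p by apply: sqrt_pos.
have pp : p * p = q by apply: sqrt_sqrt.
have p1 : p <= 1 by rewrite /p -sqrt_1; apply: sqrt_le_1_alt.
have [y [hy [hyl [_ hE]]]] := @round V E (enum V) (fun _ => p) (fun _ => conj p0 p1).
set S := [set u | if Req_EM_T (y u) 1 then true else false].
have hyS : forall u, y u = INR (u \in S).
  move=> u; rewrite inE; case: Req_EM_T => [e|ne] /=; first by rewrite e.
  by case: (hyl u (mem_enum _ _)) => // h; rewrite h.
rewrite Efconst (@Ef01 V E y S hyS) in hE.
have [S' [aS' hS']] := @removal V E HT #|S| S (leqnn #|S|).
have hal : (#|S'| <= alpha E)%N.
  apply: (@leq_bigmax_cond _ (fun S0 => acyclic_setb E S0) (fun S0 => #|S0|) S').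
  by rewrite /acyclic_setb; case: excluded_middle_informative.
have h1 : INR #|S| <= INR #|S'| + INR (triR V E S).
  rewrite -plus_INR; apply: le_INR; apply/leP; exact: hS'.
have h2 : INR #|S'| <= INR (alpha E) by apply: le_INR; apply/leP.
have key : 2 / 3 * INR n * p = INR n * p - INR t * p ^ 3.
  have -> : p ^ 3 = p * (p * p) by ring.
  rewrite pp /q; field; lra.
change (INR n * p - INR t * p ^ 3 <= INR #|S| - INR (triR V E S)) in hE.
rewrite -/q -/p key.
lra.
Qed.
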